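(* Let $G=(V,E)$ be a finite simple regular graph with $p=|V|$ vertices and $q=|E|$ edges. If $x$ is any easy construction sequence for $G$, then $\nu(x)=\nu^*(G)=q(p+q)$.
   Context: For a finite simple graph $G=(V,E)$ with $p=|V|$, $q=|E|$, put $\ell=p+q$. A construction sequence (c-sequence) for $G$ is a bijection $x:\{1,\dots,\ell\}\to V\sqcup E$ such that for every edge $e=uw$, $x^{-1}(e)>\max\{x^{-1}(u),x^{-1}(w)\}$. The cost of an edge $e=uw$ in $x$ is $\nu(e,x)=(x^{-1}(e)-x^{-1}(u))+(x^{-1}(e)-x^{-1}(w))$, and the cost of $x$ is $\nu(x)=\sum_{e\in E}\nu(e,x)$. $\nu^*(G)$ denotes the maximum of $\nu(x)$ over all c-sequences $x$ for $G$. A c-sequence is easy if no edge precedes a vertex (all vertices are listed first, then all edges). *)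

(* Defs.v *)
From mathcomp Require Import all_boot.
Set Implicit Arguments. Unset Strict Implicit. Unset Printing Implicit Defensive.

(* A finite simple graph: vertex type T (finType), adjacency e : rel T,
   assumed symmetric and irreflexive (hypotheses of the theorem). *)
Section Graph.
Variables (T : finType) (e : rel T).

Definition is_edge (A : {set T}) : bool :=
  [exists u, exists w, e u w && (A == [set u; w])].

Definition edge_t : finType := {A : {set T} | is_edge A}.

Definition VE : finType := (T + edge_t)%type.

Definition nverts : nat := #|T|.
Definition nedges : nat := #|edge_t|.
Definition ell : nat := nverts + nedges.

(* A construction sequence x : {1..ell} -> V ⊔ E is represented by its
   inverse x^{-1} : V ⊔ E -> 'I_ell (0-based positions; the cost only uses
   differences of positions, so the 0/1-based shift is irrelevant). *)
Definition pos (s : VE -> 'I_ell) (a : VE) : nat := nat_of_ord (s a).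

Definition cseq_cond (s : VE -> 'I_ell) : bool :=
  [forall E : edge_t, forall u : T,
     (u \in val E) ==> (pos s (inl u) < pos s (inr E))].

Definition easy (s : VE -> 'I_ell) : bool :=
  [forall E : edge_t, forall u : T, pos s (inl u) < pos s (inr E)].

Definition edge_cost (s : VE -> 'I_ell) (E : edge_t) : nat :=
  \sum_(u in val E) (pos s (inr E) - pos s (inl u)).

Definition cost (s : VE -> 'I_ell) : nat := \sum_(E : edge_t) edge_cost s E.

(* nu^*(G): maximum cost over all c-sequences (bijections V ⊔ E -> 'I_ell;
   since #|V ⊔ E| = ell, injectivity is equivalent to bijectivity). *)
Definition nu_star : nat :=
  \max_(s : {ffun VE -> 'I_ell} | injectiveb s && cseq_cond s) cost s.

End Graph.

Definition regular (T : finType) (e : rel T) : Prop :=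
  exists k : nat, forall v : T, #|[set w | e v w]| = k.

(* Main.v *)
Require Import Defs.
From mathcomp Require Import all_boot.
From mathcomp Require Import zify.
Set Implicit Arguments. Unset Strict Implicit. Unset Printing Implicit Defensive.

Lemma sorted_sum_ge (t : seq nat) a : sorted ltn t -> all (fun x => a <= x) t ->
  size t * (2 * a + size t - 1) <= 2 * sumn t.
Proof.
elim: t a => [|x t IH] a //= Hp /andP[Hax Ha].
have Hall : all (fun y => x.+1 <= y) t by apply: (order_path_min ltn_trans Hp).
have := IH x.+1 (path_sorted Hp) Hall.
set n := size t; set S := sumn t => H.
nia.
Qed.

Lemma uniq_sum_ge (s : seq nat) a : uniq s -> all (fun x => a <= x) s ->
  size s * (2 * a + size s - 1) <= 2 * sumn s.
Proof.
move=> Hu Ha.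
have Hp : perm_eq (sort leq s) s by apply: permEl; apply: perm_sort.
rewrite -(perm_size Hp) -(perm_sumn Hp).
apply: sorted_sum_ge.
  by rewrite ltn_sorted_uniq_leq sort_uniq Hu sort_sorted //; apply: leq_total.
by rewrite all_sort.
Qed.

Lemma sum_ord_id n : 2 * \sum_(i < n) (i : nat) = n * (n - 1).
Proof.
elim: n => [|n IH]; first by rewrite big_ord0.
rewrite big_ord_recr /= mulnDr IH; nia.
Qed.

Section G.
Variables (T : finType) (e : rel T).
Hypotheses (e_sym : symmetric e) (e_irr : irreflexive e).
Variable k : nat.
Hypothesis (e_reg : forall v : T, #|[set w | e v w]| = k).

Lemma edge_form (E : edge_t e) : exists a b, e a b /\ val E = [set a; b].
Proof.
case: E => A /= /existsP[a /existsP[b /andP[Hab /eqP ->]]].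
by exists a, b.
Qed.

Lemma card_edge (E : edge_t e) : #|val E| = 2.
Proof.
have [a [b [Hab ->]]] := edge_form E.
rewrite cards2; case: eqP => // Eab; by rewrite Eab e_irr in Hab.
Qed.

Lemma edge_other (E : edge_t e) u : u \in val E ->
  exists w, e u w /\ val E = [set u; w].
Proof.
have [a [b [Hab ->]]] := edge_form E.
rewrite !inE => /orP[/eqP ->|/eqP ->]; first by exists b.
by exists a; rewrite e_sym setUC.
Qed.

Definition phi (u : T) (E : edge_t e) : T := odflt u [pick w in val E :\ u].

Lemma phiE u w (E : edge_t e) : e u w -> val E = [set u; w] -> phi u E = w.
Proof.
move=> Huw HE.
have Hneq : u != w by apply/eqP => Eq; rewrite Eq e_irr in Huw.
have Hs : val E :\ u = [set w].
  apply/setP => z; rewrite HE !inE.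
  case: (eqVneq z w) => [Ezw|Hzw]; first by subst z; rewrite orbT andbT eq_sym.
  by rewrite orbF andNb.
rewrite /phi Hs; case: pickP => [z|]; first by rewrite inE => /eqP.
by move/(_ w); rewrite inE eqxx.
Qed.

Lemma deg_edges u : #|[set E : edge_t e | u \in val E]| = k.
Proof.
rewrite -(e_reg u).
have inj : {in [set E : edge_t e | u \in val E] &, injective (phi u)}.
  move=> E1 E2; rewrite !inE => /edge_other[w1 [H1 E1e]] /edge_other[w2 [H2 E2e]].
  rewrite (phiE H1 E1e) (phiE H2 E2e) => Ew.
  by apply: val_inj; rewrite E1e E2e Ew.
rewrite -(card_in_imset inj); apply: eq_card => w.
rewrite inE; apply/imsetP/idP.
  case=> E; rewrite inE => /edge_other[w' [H' HE]] ->.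
  by rewrite (phiE H' HE).
move=> Huw.
have Hed : is_edge e [set u; w].
  by apply/existsP; exists u; apply/existsP; exists w; rewrite Huw eqxx.
exists (@exist _ (fun A => is_edge e A) _ Hed : edge_t e); first by rewrite inE /= set21.
by rewrite (phiE Huw).
Qed.

Lemma double_count (f : T -> nat) :
  \sum_(E : edge_t e) \sum_(u in val E) f u = k * \sum_u f u.
Proof.
under eq_bigr do rewrite big_mkcond.
rewrite exchange_big /= big_distrr /=; apply: eq_bigr => u _.
rewrite -big_mkcond /= sum_nat_const.
rewrite -(deg_edges u); congr (_ * _).
by apply: eq_card => E; rewrite inE.
Qed.

Lemma kp_2q : k * nverts T = 2 * nedges e.
Proof.
have := double_count (fun _ => 1).
rewrite /nverts /nedges sum1_card => <-.
rewrite -sum1_card big_distrr /=; apply: eq_bigr => E _.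
by rewrite sum1_card card_edge.
Qed.

Definition SV (s : VE e -> 'I_(ell e)) := \sum_u pos s (inl u).
Definition SE (s : VE e -> 'I_(ell e)) := \sum_E pos s (inr E).

Lemma cost_eq s : cseq_cond s -> cost s + k * SV s = 2 * SE s.
Proof.
move=> Hc.
rewrite /SV -double_count /cost -big_split /SE big_distrr /=.
apply: eq_bigr => E _.
rewrite /edge_cost -big_split /=.
rewrite (eq_bigr (fun _ => pos s (inr E))); last first.
  move=> u Hu; rewrite subnK //; apply: ltnW.
  by move/forallP: Hc => /(_ E)/forallP/(_ u)/implyP; apply.
by rewrite sum_nat_const card_edge mulnC.
Qed.

Lemma tot_eq s : injective s -> 2 * (SV s + SE s) = ell e * (ell e - 1).
Proof.
move=> Hinj.
have Hb : bijective s.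
  apply: (inj_card_bij Hinj); by rewrite card_ord card_sum.
rewrite -sum_ord_id (reindex s (onW_bij _ Hb)) /= big_sumType.
by [].
Qed.

Lemma SV_ge s : injective s -> nverts T * (nverts T - 1) <= 2 * SV s.
Proof.
move=> Hinj.
pose vs := [seq pos s (inl u) | u <- enum T].
have Hu : uniq vs.
  rewrite map_inj_uniq ?enum_uniq // => u v H.
  by have := Hinj _ _ (val_inj H) => -[].
have := @uniq_sum_ge _ 0 Hu (introT allP (fun _ _ => leq0n _)).
by rewrite size_map -cardE /SV sumnE big_map big_enum.
Qed.

Lemma SE_ge s : injective s -> easy s ->
  nedges e * (2 * nverts T + nedges e - 1) <= 2 * SE s.
Proof.
move=> Hinj Heasy.
pose vs := [seq pos s (inl u) | u <- enum T].
have Hu : uniq vs.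
  rewrite map_inj_uniq ?enum_uniq // => u v H.
  by have := Hinj _ _ (val_inj H) => -[].
pose es := [seq pos s (inr E) | E <- enum (edge_t e)].
have Heu : uniq es.
  rewrite map_inj_uniq ?enum_uniq // => u v H.
  by have := Hinj _ _ (val_inj H) => -[].
have Hall : all (fun x => nverts T <= x) es.
  apply/allP => x /mapP[E _ ->].
  have : size vs <= size (iota 0 (pos s (inr E))).
    apply: (uniq_leq_size Hu) => y /mapP[u _ ->].
    rewrite mem_iota /=.
    by move/forallP: Heasy => /(_ E)/forallP/(_ u).
  by rewrite size_map size_iota -cardE.
have := uniq_sum_ge Heu Hall.
by rewrite size_map -cardE /SE sumnE big_map big_enum.
Qed.

Lemma cost_le (s : VE e -> 'I_(ell e)) : injective s -> cseq_cond s ->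
  cost s <= nedges e * (nverts T + nedges e).
Proof.
move=> Hinj Hc.
have H1 := cost_eq Hc. have H2 := tot_eq Hinj. have H3 := SV_ge Hinj.
have H4 := kp_2q.
move: H1 H2 H3 H4; rewrite /ell.
set p := nverts T; set q := nedges e; set a := SV s; set b := SE s; set c := cost s.
case: p => [|p'] H1 H2 H3 H4.
  have q0 : q = 0 by lia.
  rewrite q0 in H2; rewrite q0. lia.
have H5 : k * (p'.+1 * (p'.+1 - 1)) <= k * (2 * a) by apply: leq_mul.
rewrite mulnA H4 subSS subn0 in H5.
rewrite subSS subn0 in H3.
rewrite addSn subSS subn0 in H2.
set X := k * a in H1 H5.
lia.
Qed.

Lemma cost_ge (s : VE e -> 'I_(ell e)) : injective s -> cseq_cond s -> easy s ->
  nedges e * (nverts T + nedges e) <= cost s.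
Proof.
move=> Hinj Hc He.
have H1 := cost_eq Hc. have H2 := tot_eq Hinj. have H3 := SE_ge Hinj He.
have H4 := kp_2q.
move: H1 H2 H3 H4; rewrite /ell.
set p := nverts T; set q := nedges e; set a := SV s; set b := SE s; set c := cost s.
case: p => [|p'] H1 H2 H3 H4.
  have q0 : q = 0 by lia.
  rewrite q0 in H2 *. lia.
rewrite addSn subSS subn0 in H2.
have Ha : 2 * a <= p'.+1 * p' by lia.
have H5 : 2 * (k * a) <= 2 * q * p'.
  by rewrite mulnCA -H4 -mulnA; apply: leq_mul.
set X := k * a in H1 H5.
lia.
Qed.

End G.

Lemma cost_ext (T : finType) (e : rel T) (s1 s2 : VE e -> 'I_(ell e)) :
  s1 =1 s2 -> cost s1 = cost s2.
Proof.
move=> H; apply: eq_bigr => E _; apply: eq_bigr => u _.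
by rewrite /pos !H.
Qed.

Theorem theorem1 (T : finType) (e : rel T)
  (e_sym : symmetric e) (e_irr : irreflexive e) (e_reg : regular e)
  (x : VE e -> 'I_(ell e)) (x_bij : bijective x)
  (x_cseq : cseq_cond x) (x_easy : easy x) :
  cost x = nu_star e /\ nu_star e = nedges e * (nverts T + nedges e).
Proof.
case: e_reg => k Hk.
have Hinj : injective x by apply: bij_inj.
have Hc := cost_le e_sym e_irr Hk Hinj x_cseq.
have Hc' := cost_ge e_sym e_irr Hk Hinj x_cseq x_easy.
have Hx : cost x = nedges e * (nverts T + nedges e) by apply/eqP; rewrite eqn_leq Hc Hc'.
have Hnu : nu_star e = nedges e * (nverts T + nedges e).
  apply/eqP; rewrite eqn_leq; apply/andP; split.
    apply/bigmax_leqP => s /andP[/injectiveP Hs Hcs].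
    exact: (@cost_le T e e_sym e_irr k Hk (fun a => s a) Hs Hcs).
  rewrite -Hx.
  have Hf : injectiveb (finfun x) && cseq_cond (finfun x).
    apply/andP; split.
      by apply/injectiveP => a b; rewrite !ffunE; apply: Hinj.
    apply/forallP => E; apply/forallP => u; apply/implyP => Hu.
    rewrite /pos !ffunE.
    by move/forallP: x_cseq => /(_ E)/forallP/(_ u)/implyP; apply.
  rewrite (@cost_ext _ _ x (finfun x)); last by move=> a; rewrite ffunE.
  rewrite /nu_star; exact: (@leq_bigmax_cond _ (fun s : {ffun VE e -> 'I_(ell e)} => injectiveb s && cseq_cond s) (fun s => cost s) _ Hf).
by rewrite Hx Hnu.
Qed.
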